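(* Let $\langle S,L,\tau,\ell\rangle$ be a labelled Markov chain. For every robust bisimulation $R\subseteq S\times S$ we have $R\subseteq\,\simeq$. (Together with the fact that $\simeq$ is a robust bisimulation, $\simeq$ is the greatest robust bisimulation.)
   Context: Labelled Markov chain $\langle S,L,\tau,\ell\rangle$: finite $S$, finite $L$, $\tau:S\to\mathcal{D}(S)$, $\ell:S\to L$, $|\ell(S)|\ge 2$. $\Omega(\mu,\nu)$ = couplings (distributions on $S\times S$ with marginals $\mu,\nu$). A (probabilistic) bisimulation is an equivalence relation $R\subseteq S\times S$ such that for all $(s,t)\in R$, $\ell(s)=\ell(t)$ and some $\omega\in\Omega(\tau(s),\tau(t))$ has $\mathrm{support}(\omega)\subseteq R$. $S^2_\Delta=\{(s,s)\}$, $S^2_1=\{(s,t)\mid\ell(s)\ne\ell(t)\}$. A policy is $P:S\times S\to\mathcal{D}(S\times S)$ with $P(s,t)\in\Omega(\tau(s),\tau(t))$ for $(s,t)\notin S^2_1$ and $P(s,t)$ the point mass at $(s,t)$ for $(s,t)\in S^2_1$; $\mathcal{P}$ is the set of policies; $P$ induces the Markov chain $\langle S\times S,P\rangle$. Robust bisimilarity: $s\simeq t$ iff some $P\in\mathcal{P}$ makes $(s,t)$ reach $S^2_\Delta$ with probability $1$ in $\langle S\times S,P\rangle$. For a policy $P$, a set $R$ supports a path $(u_1,v_1)\dots(u_n,v_n)$ of $\langle S\times S,P\rangle$ if $(u_i,v_i)\in R$ and $\mathrm{support}(P(u_i,v_i))\subseteq R$ for all $i$. A robust bisimulation is a bisimulation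 $R$ such that for every $(s,t)\in R$ there is $P\in\mathcal{P}$ such that $R$ supports a path from $(s,t)$ to $S^2_\Delta$ in $\langle S\times S,P\rangle$. *)

(* Defs.v *)
From HB Require Import structures.
From mathcomp Require Import all_boot all_order all_algebra.
From mathcomp Require Import reals.
Set Implicit Arguments. Unset Strict Implicit. Unset Printing Implicit Defensive.
Import Order.TTheory GRing.Theory Num.Theory.
Local Open Scope ring_scope.

Definition is_distr (R : realType) (T : finType) (mu : {ffun T -> R}) : Prop :=
  (forall x, 0 <= mu x) /\ \sum_(x : T) mu x = 1.

Definition is_LMC (R : realType) (S L : finType) (tau : S -> {ffun S -> R})
  (ell : S -> L) : Prop :=
  (forall s, is_distr (tau s)) /\ (2 <= #|[set ell s | s : S]|)%N.

Definition coupling (R : realType) (S : finType) (mu nu : {ffun S -> R})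
  (omega : {ffun S * S -> R}) : Prop :=
  is_distr omega /\
  (forall s, \sum_(t : S) omega (s, t) = mu s) /\
  (forall t, \sum_(s : S) omega (s, t) = nu t).

Definition support_in (R : realType) (S : finType) (omega : {ffun S * S -> R})
  (Rel : rel S) : Prop :=
  forall p : S * S, omega p != 0 -> Rel p.1 p.2.

Definition equivalence_rel (S : finType) (Rel : rel S) : Prop :=
  reflexive Rel /\ symmetric Rel /\ transitive Rel.

Definition bisimulation (R : realType) (S L : finType) (tau : S -> {ffun S -> R})
  (ell : S -> L) (Rel : rel S) : Prop :=
  equivalence_rel Rel /\
  forall s t, Rel s t ->
    ell s = ell t /\ exists omega, coupling (tau s) (tau t) omega /\ support_in omega Rel.

Definition dirac (R : realType) (T : finType) (p : T) : {ffun T -> R} :=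
  [ffun q => if q == p then 1 else 0].

Definition policy (R : realType) (S L : finType) (tau : S -> {ffun S -> R})
  (ell : S -> L) (P : S * S -> {ffun S * S -> R}) : Prop :=
  forall s t,
    (ell s = ell t -> coupling (tau s) (tau t) (P (s, t))) /\
    (ell s <> ell t -> P (s, t) = @dirac R _ (s, t)).

Definition diag (S : finType) (u : S * S) : bool := u.1 == u.2.

(* probability, in the Markov chain <S x S, P>, of reaching S^2_Delta from u
   within n steps *)
Fixpoint reach_within (R : realType) (S : finType) (P : S * S -> {ffun S * S -> R})
  (n : nat) (u : S * S) : R :=
  if diag u then 1 else
  match n with
  | 0 => 0
  | n'.+1 => \sum_(v : S * S) P u v * reach_within P n' v
  end.

(* the probability of eventually reaching S^2_Delta from u is 1, i.e.
   sup_n reach_within P n u = 1 (the events are increasing in n) *)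
Definition reach_prob1 (R : realType) (S : finType) (P : S * S -> {ffun S * S -> R})
  (u : S * S) : Prop :=
  forall eps : R, 0 < eps -> exists n, 1 - eps <= reach_within P n u.

Definition robust_bisimilar (R : realType) (S L : finType) (tau : S -> {ffun S -> R})
  (ell : S -> L) (s t : S) : Prop :=
  exists P, policy tau ell P /\ reach_prob1 P (s, t).

(* Rel supports the path u_1 ... u_n of <S x S, P> (given as u_1 :: us) *)
Definition supports_path (R : realType) (S : finType) (P : S * S -> {ffun S * S -> R})
  (Rel : rel S) (u1 : S * S) (us : seq (S * S)) : Prop :=
  path (fun a b => 0 < P a b) u1 us /\
  (forall u, u \in u1 :: us -> Rel u.1 u.2 /\ support_in (P u) Rel).

Definition robust_bisimulation (R : realType) (S L : finType) (tau : S -> {ffun S -> R})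
  (ell : S -> L) (Rel : rel S) : Prop :=
  bisimulation tau ell Rel /\
  forall s t, Rel s t ->
    exists P, policy tau ell P /\
      exists us, supports_path P Rel (s, t) us /\ diag (last (s, t) us).

(* Main.v *)
Require Import Defs.
From HB Require Import structures.
From mathcomp Require Import all_boot all_order all_algebra.
From mathcomp Require Import reals lra.
From Stdlib Require Import ClassicalEpsilon.
Set Implicit Arguments. Unset Strict Implicit. Unset Printing Implicit Defensive.
Import Order.TTheory GRing.Theory Num.Theory.
Local Open Scope ring_scope.

Lemma fchoice (A B : Type) (Pr : A -> B -> Prop) :
  (forall a, exists b, Pr a b) -> exists f : A -> B, forall a, Pr a (f a).
Proof.
move=> H; exists (fun a => proj1_sig (constructive_indefinite_description _ (H a))).
by move=> a; case: (constructive_indefinite_description _ (H a)).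
Qed.

Lemma unif_pos (R : realType) (T : finType) (Pr : T -> R -> Prop) :
  (forall x, exists2 e, 0 < e & Pr x e) ->
  (forall x e e', 0 < e' -> e' <= e -> Pr x e -> Pr x e') ->
  exists d, [/\ 0 < d, d <= 1 & forall x, Pr x d].
Proof.
move=> H Hmon.
have H' : forall x, exists e, 0 < e /\ Pr x e.
  by move=> x; case: (H x) => e h1 h2; exists e.
have [f Hf] := fchoice H'.
exists (\big[Order.min/1]_x f x); split.
- apply: (big_ind (fun y => 0 < y)) => //.
  by move=> a b ha hb; rewrite lt_min ha hb.
  by move=> x _; case: (Hf x).
- exact: bigmin_le_id.
- move=> x; case: (Hf x) => h1 h2; apply: (Hmon x (f x) _ _ _ h2).
  apply: (big_ind (fun y => 0 < y)) => //.
  by move=> a b ha hb; rewrite lt_min ha hb.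
  by move=> y _; case: (Hf y).
  exact: bigmin_le.
Qed.

Lemma geom_small (R : realType) (a eps : R) : 0 < a -> a <= 1 -> 0 < eps ->
  exists j : nat, (1 - a) ^+ j <= eps.
Proof.
move=> a0 a1 e0.
have bern : forall j : nat, (1 - a) ^+ j * (1 + j%:R * a) <= 1.
  elim=> [|j IH]; first by rewrite expr0 mul0r addr0 mul1r.
  have h0 : 0 <= (1 - a) ^+ j by apply: exprn_ge0; lra.
  rewrite exprSr -mulrA.
  apply: le_trans IH; apply: ler_wpM2l => //; rewrite -natr1.
have jj : 0 <= (j%:R : R) by apply: ler0n.
nra.
pose x := (a * eps)^-1.
have x0 : 0 <= x by rewrite invr_ge0; apply: mulr_ge0; lra.
have hb := archi_boundP x0.
exists (Num.Def.archi_bound x).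
set j := Num.Def.archi_bound x in hb *.
have hj := bern j.
have h0 : 0 <= (1 - a) ^+ j by apply: exprn_ge0; lra.
have ae : 0 < a * eps by apply: mulr_gt0.
rewrite /x -(ltr_pM2r ae) mulVf ?gt_eqF // in hb.
have jj : 0 <= (j%:R : R) by apply: ler0n.
nra.
Qed.

Section Main.
Variables (R : realType) (S L : finType) (tau : S -> {ffun S -> R})
  (ell : S -> L) (Rel : rel S).

Lemma dirac_distr (T : finType) (p : T) : is_distr (@dirac R T p).
Proof.
split=> [x|]; first by rewrite /dirac ffunE; case: ifP.
rewrite (bigD1 p) //= big1 ?addr0 /dirac ?ffunE ?eqxx //.
by move=> x /negbTE hx; rewrite ffunE hx.
Qed.

Lemma policy_distr P : policy tau ell P -> forall u, is_distr (P u).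
Proof.
move=> HP [s t]; case: (HP s t) => h1 h2.
case: (eqVneq (ell s) (ell t)) => [/h1 [] //|/eqP/h2 ->]; exact: dirac_distr.
Qed.

Variable P : S * S -> {ffun S * S -> R}.
Hypothesis HPd : forall u, is_distr (P u).
Hypothesis Hsupp : forall u, Rel u.1 u.2 -> support_in (P u) Rel.

Definition g n u := 1 - reach_within P n u.

Lemma reach_bounds n u : 0 <= reach_within P n u <= 1.
Proof.
elim: n u => [|n IH] u /=; first by case: ifP => _; rewrite ?lexx ?ler01.
case: ifP => _; first by rewrite lexx ler01.
case: (HPd u) => h0 h1; apply/andP; split.
  by apply: sumr_ge0 => v _; apply: mulr_ge0 => //; case/andP: (IH v).
rewrite -[X in _ <= X]h1; apply: ler_sum => v _; rewrite -{2}(mulr1 (P u v)).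
by apply: ler_wpM2l => //; case/andP: (IH v).
Qed.

Lemma g_bounds n u : 0 <= g n u <= 1.
Proof. by rewrite /g; case/andP: (reach_bounds n u) => a b; apply/andP; split; lra. Qed.

Lemma g_diag n u : diag u -> g n u = 0.
Proof. by rewrite /g; case: n => [|n] /= ->; rewrite subrr. Qed.

Lemma g_rec n u : ~~ diag u -> g n.+1 u = \sum_v P u v * g n v.
Proof.
move=> hd; rewrite /g /= (negbTE hd).
case: (HPd u) => _ h1.
rewrite -{1}h1 -sumrB; apply: eq_bigr => v _; by rewrite mulrBr mulr1.
Qed.

Lemma term_bound u m (c : R) v : Rel u.1 u.2 ->
  (forall v, Rel v.1 v.2 -> g m v <= c) -> P u v * g m v <= P u v * c.
Proof.
move=> hu hc; case: (eqVneq (P u v) 0) => [->|hnz]; first by rewrite !mul0r.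
apply: ler_wpM2l; first by case: (HPd u).
exact: hc (Hsupp hu hnz).
Qed.

Lemma stepA m (c : R) : 0 <= c -> (forall v, Rel v.1 v.2 -> g m v <= c) ->
  forall v, Rel v.1 v.2 -> g m.+1 v <= c.
Proof.
move=> c0 hc u hu; case hd: (diag u); first by rewrite g_diag.
rewrite g_rec ?hd //.
case: (HPd u) => _ h1.
apply: le_trans (_ : \sum_v P u v * c <= c).
  by apply: ler_sum => v _; apply: term_bound.
by rewrite -mulr_suml h1 mul1r.
Qed.

Lemma iterA m (c : R) : 0 <= c -> (forall v, Rel v.1 v.2 -> g m v <= c) ->
  forall j v, Rel v.1 v.2 -> g (m + j) v <= c.
Proof.
move=> c0 hc; elim=> [|j IH]; first by rewrite addn0.
by rewrite addnS; apply: stepA.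
Qed.

Variables (rk : S * S -> nat) (d : R).
Hypotheses (d0 : 0 < d) (d1 : d <= 1).
Hypothesis Hdesc : forall u, Rel u.1 u.2 -> ~~ diag u ->
  exists w, [/\ Rel w.1 w.2, d <= P u w & (rk w < rk u)%N].

Lemma stepB k : forall u n (c : R), 0 <= c -> (forall v, Rel v.1 v.2 -> g n v <= c) ->
  Rel u.1 u.2 -> (rk u <= k)%N -> g (n + k) u <= (1 - d ^+ k) * c.
Proof.
elim: k => [|k IH] u n c c0 hc hu hk.
  case hd: (diag u); first by rewrite g_diag // expr0 subrr mul0r.
  by case: (Hdesc hu (negbT hd)) => w [_ _]; rewrite ltnNge (leq_trans hk).
have dk : 0 <= d ^+ k by apply: exprn_ge0; apply: ltW.
have dk1 : d ^+ k <= 1 by apply: exprn_ile1 => //; apply: ltW.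
case hd: (diag u).
  rewrite g_diag //; apply: mulr_ge0 => //; rewrite exprS.
  have : d * d ^+ k <= 1 by apply: mulr_ile1 => //; apply: ltW.
  lra.
case: (Hdesc hu (negbT hd)) => w [hw dw rkw].
rewrite addnS g_rec ?hd // (bigD1 w) //=.
case: (HPd u) => h0 h1.
move: h1; rewrite (bigD1 w) //= => h1.
have hrest : \sum_(v | v != w) P u v * g (n + k) v <= (\sum_(v | v != w) P u v) * c.
  rewrite mulr_suml; apply: ler_sum => v _; apply: term_bound => //.
  by move=> v' hv'; apply: iterA.
have hgw : g (n + k) w <= (1 - d ^+ k) * c.
  by apply: IH => //; rewrite -ltnS (leq_trans rkw).
have hgw0 : 0 <= g (n + k) w by case/andP: (g_bounds (n + k) w).
have pw := h0 w.
move: hrest hgw hgw0 pw dw h1 dk.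
set s1 := \sum_(v | v != w) P u v * g (n + k) v.
set s2 := \sum_(v | v != w) P u v.
set G := g (n + k) w; set D := d ^+ k; set p := P u w.
rewrite exprS -/D => hrest hgw hgw0 pw dw h1 dk.
have e1 : p * G <= p * ((1 - D) * c) by apply: ler_wpM2l.
have e2 : 0 <= (p - d) * (D * c) by apply: mulr_ge0; [lra | apply: mulr_ge0].
have e3 : s1 + p * G <= s2 * c + p * ((1 - D) * c) by lra.
rewrite addrC; apply: (le_trans e3).
have -> : s2 = 1 - p by lra.
move: e2; rewrite !mulrBl !mulrBr !mul1r; lra.
Qed.

End Main.

Theorem proposition4 (R : realType) (S L : finType) (tau : S -> {ffun S -> R})
  (ell : S -> L) (Rel : rel S) :
  is_LMC tau ell ->
  robust_bisimulation tau ell Rel ->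
  forall s t, Rel s t -> robust_bisimilar tau ell s t.
Proof.
move=> [Hdist _] [[[Hrefl _] _] Hrob] s t Hst.
pose W (u : S * S) (k : nat) := exists P us, policy tau ell P /\
  supports_path P Rel u us /\ diag (last u us) /\ size us = k.
have Hex : forall u, Rel u.1 u.2 -> exists k, W u k.
  case=> a b /= hab; case: (Hrob a b hab) => P [hP [us [hs hd]]].
  by exists (size us), P, us.
have Hrk' : forall u, exists m : nat, Rel u.1 u.2 -> W u m /\ forall k, W u k -> (m <= k)%N.
  move=> u; case: (excluded_middle_informative (Rel u.1 u.2)) => hu; last first.
    by exists 0%N.
  pose pb k := if excluded_middle_informative (W u k) then true else false.
  have hpb k : pb k = true <-> W u k.
    by rewrite /pb; case: excluded_middle_informative.
  have : exists k, pb k by case: (Hex u hu) => k hk; exists k; apply/hpb.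
  case/ex_minnP => m hm hmin; exists m => _; split; first by apply/hpb.
  by move=> k /hpb; apply: hmin.
have [rk Hrk] := fchoice Hrk'.
have HPP' : forall u, exists P : S * S -> {ffun S * S -> R},
    policy tau ell P /\ (Rel u.1 u.2 -> exists us,
      supports_path P Rel u us /\ diag (last u us) /\ size us = rk u).
  move=> u; case: (excluded_middle_informative (Rel u.1 u.2)) => hu.
    case: (Hrk u hu) => [[P [us [hP [hs [hd hsz]]]]] _].
    by exists P; split => // _; exists us.
  case: (Hrob u.1 u.1 (Hrefl _)) => P [hP _]; by exists P.
have [PP HPP] := fchoice HPP'.
pose Q u := PP u u.
have HQ : policy tau ell Q by move=> a b; case: (HPP (a, b)) => hp _; exact: hp a b.
have HQd := policy_distr HQ.
have Hsupp : forall u, Rel u.1 u.2 -> support_in (Q u) Rel.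
  move=> u hu; case: (HPP u) => _ /(_ hu) [us [[_ hm] _]].
  by case: (hm u (mem_head _ _)).
have Hdesc0 : forall u, Rel u.1 u.2 -> ~~ diag u ->
    exists w, [/\ Rel w.1 w.2, 0 < Q u w & (rk w < rk u)%N].
  move=> u hu hnd; case: (HPP u) => hP /(_ hu) [us [[hpath hm] [hd hsz]]].
  case: us hpath hm hd hsz => [|w us'] hpath hm hd hsz.
    by rewrite /= hd in hnd.
  move: hpath => /= /andP [hpos hpath'].
  have hw : Rel w.1 w.2 by case: (hm w); rewrite ?inE ?eqxx ?orbT.
  exists w; split => //.
  rewrite -hsz /= ltnS.
  case: (Hrk w hw) => _; apply; exists (PP u), us'; split => //; split => //.
  split => // x hx; apply: hm; by rewrite inE hx orbT.
pose Pr (u : S * S) (e : R) := Rel u.1 u.2 -> ~~ diag u ->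
    exists w, [/\ Rel w.1 w.2, e <= Q u w & (rk w < rk u)%N].
have Hu1 : forall u, exists2 e, 0 < e & Pr u e.
  move=> u; case: (excluded_middle_informative (Rel u.1 u.2 /\ ~~ diag u)) => [[hu hd]|hn].
    case: (Hdesc0 u hu hd) => w [hw hp hr]; exists (Q u w) => // _ _; by exists w.
  exists 1 => // hu hd; exfalso; exact: hn.
have Hu2 : forall u e e', 0 < e' -> e' <= e -> Pr u e -> Pr u e'.
  move=> u e e' _ hle h hu hd.
  case: (h hu hd) => w [hw hp hr]; exists w; split => //; exact: le_trans hp.
have [d [d0 d1 Hd]] := unif_pos Hu1 Hu2.
pose K := (\max_(u : S * S) rk u)%N.
have hK : forall u, (rk u <= K)%N by move=> u; apply: leq_bigmax.
have dK0 : 0 < d ^+ K by apply: exprn_gt0.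
have dK1 : d ^+ K <= 1 by apply: exprn_ile1 => //; apply: ltW.
have bound : forall j u, Rel u.1 u.2 -> g Q (j * K) u <= (1 - d ^+ K) ^+ j.
  elim=> [|j IH] u hu.
    by rewrite mul0n expr0; case/andP: (g_bounds HQd 0 u).
  rewrite mulSnr exprS.
  apply: (stepB HQd Hsupp d0 d1 Hd) => //.
  by apply: exprn_ge0; lra.
exists Q; split => // eps eps0.
case: (geom_small dK0 dK1 eps0) => j hj.
exists (j * K)%N.
have := bound j (s, t) Hst; rewrite /g; lra.
Qed.
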